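(* Suppose a resolvable Steiner system $S(n,k-1,2)$ exists, and let $H_1,\ldots,H_t$ be graphs each of order less than $k$, where $t\le (n-1)/(k-2)$. Then $f(H_1,\ldots,H_t)\le n$.
   Context: All graphs are finite and simple; the order of a graph is its number of vertices. A graph $G$ is $(H_1,\ldots,H_t)$-full if every vertex of $G$ belongs to an induced subgraph of $G$ isomorphic to $H_i$, for each $i$. $f(H_1,\ldots,H_t)$ denotes the minimum order of an $(H_1,\ldots,H_t)$-full graph. A Steiner system $S(n,k-1,2)$ is a $(k-1)$-uniform hypergraph on $n$ vertices in which every pair of vertices lies in exactly one edge; it is resolvable if its edge set can be partitioned into perfect matchings (sets of pairwise disjoint edges whose union is the whole vertex set). *)

(* Defs.v *)
From mathcomp Require Import all_boot.
Unset Printing Implicit Defensive.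

Record sgraph := SGraph {
  sg_order : nat;
  sg_adj : rel 'I_sg_order;
  sg_sym : symmetric sg_adj;
  sg_irr : irreflexive sg_adj }.

Definition induced_emb (H G : sgraph) (f : 'I_(sg_order H) -> 'I_(sg_order G)) : Prop :=
  injective f /\ forall i j, sg_adj G (f i) (f j) = sg_adj H i j.

Definition in_induced_copy (G H : sgraph) (v : 'I_(sg_order G)) : Prop :=
  exists f, induced_emb H G f /\ exists i, f i = v.

Definition full (G : sgraph) (t : nat) (Hs : 'I_t -> sgraph) : Prop :=
  forall (v : 'I_(sg_order G)) (i : 'I_t), in_induced_copy G (Hs i) v.

Definition is_f (t : nat) (Hs : 'I_t -> sgraph) (m : nat) : Prop :=
  (exists G, full G t Hs /\ 0 < sg_order G /\ sg_order G = m) /\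
  (forall G, full G t Hs -> 0 < sg_order G -> m <= sg_order G).

Definition steiner_system (n r : nat) (B : {set {set 'I_n}}) : Prop :=
  (forall b, b \in B -> #|b| = r) /\
  (forall x y : 'I_n, x != y -> #|[set b in B | (x \in b) && (y \in b)]| = 1).

Definition resolvable (n : nat) (B : {set {set 'I_n}}) : Prop :=
  exists P : {set {set {set 'I_n}}},
    partition P B /\
    (forall C, C \in P -> trivIset C /\ cover C = [set: 'I_n]).

(* Main.v *)
Require Import Defs.
From mathcomp Require Import all_boot.
From mathcomp Require Import zify.
From Stdlib Require Import Classical.

Lemma min_ex (Q : nat -> Prop) N :
  Q N -> exists m, Q m /\ (forall j, Q j -> m <= j) /\ m <= N.
Proof.
elim/ltn_ind: N => N IH QN.
case: (classic (exists j, j < N /\ Q j)) => [[j [jN Qj]]|nj].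
- have [m [Qm [mmin mj]]] := IH j jN Qj.
  exists m; split=> //; split=> //; exact: leq_trans mj (ltnW jN).
- exists N; split=> //; split=> //.
  move=> j Qj; rewrite leqNgt; apply/negP => jN; apply: nj; by exists j.
Qed.

Theorem theorem2p2 (n k t : nat) (Hs : 'I_t -> sgraph) :
  3 <= k ->
  (exists B : {set {set 'I_n}}, steiner_system n (k - 1) B /\ resolvable n B) ->
  (forall i, 0 < sg_order (Hs i) < k) ->
  t * (k - 2) + 1 <= n ->
  exists m, is_f t Hs m /\ m <= n.
Proof.
move=> k3 [B [[Bcard Buniq] [P [partP Pcls]]]] Hord tn.
have n0 : 0 < n by apply: leq_trans tn; rewrite addn1.
have hpos i : 0 < sg_order (Hs i) by case/andP: (Hord i).
have PB C b : C \in P -> b \in C -> b \in B.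
  move=> CP bC; rewrite -(cover_partition partP); apply/bigcupP; by exists C.
have blk C v : C \in P -> exists2 b, b \in C & v \in b.
  move=> CP; have : v \in cover C by rewrite (Pcls C CP).2 inE.
  by case/bigcupP=> b bC vb; exists b.
have uniqB x y b b' : x != y -> b \in B -> b' \in B -> x \in b -> y \in b ->
    x \in b' -> y \in b' -> b = b'.
  move=> xy bB b'B xb yb xb' yb'.
  have /cards1P [b0 E] : #|[set b in B | (x \in b) && (y \in b)]| == 1 by rewrite Buniq.
  have : b \in [set b0] by rewrite -E inE bB xb yb.
  have : b' \in [set b0] by rewrite -E inE b'B xb' yb'.
  by rewrite !inE => /eqP -> /eqP ->.
have trivC C b b' x : C \in P -> b \in C -> b' \in C -> x \in b -> x \in b' -> b = b'.
  move=> CP bC b'C xb xb'; case: (eqVneq b b') => // ne.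
  have := trivIsetP (Pcls C CP).1 b b' bC b'C ne.
  by move/disjointFr => /(_ x xb); rewrite xb'.
have trivP C C' b : C \in P -> C' \in P -> b \in C -> b \in C' -> C = C'.
  move=> CP C'P bC bC'; case: (eqVneq C C') => // ne.
  have := trivIsetP (partition_trivIset partP) C C' CP C'P ne.
  by move/disjointFr => /(_ b bC); rewrite bC'.
have tP : t <= #|P|.
  pose x0 : 'I_n := Ordinal n0.
  pose Bx := [set b in B | x0 \in b].
  pose Q := [set b :\ x0 | b in Bx].
  have h1 : n.-1 <= #|cover Q|.
    rewrite -{1}(card_ord n) -(cardsC1 x0); apply subset_leq_card; apply/subsetP => y.
    rewrite !inE => yx.
    have /cards1P [b0 E] : #|[set b in B | (x0 \in b) && (y \in b)]| == 1.
      by rewrite Buniq // eq_sym.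
    have : b0 \in [set b0] by rewrite inE.
    rewrite -E inE => /andP [b0B /andP [xb yb]].
    apply/bigcupP; exists (b0 :\ x0); last by rewrite !inE yx yb.
    by apply/imsetP; exists b0 => //; rewrite inE b0B xb.
  have h2 : #|cover Q| <= \sum_(A in Q) #|A| := (leq_card_cover Q).1.
  have h3 : \sum_(A in Q) #|A| = #|Q| * (k - 2).
    rewrite -sum_nat_const; apply eq_bigr => A /imsetP [b]; rewrite inE => /andP[bB xb] ->.
    have := cardsD1 x0 b; rewrite xb Bcard //; lia.
  have h4 : #|Q| <= #|Bx| := leq_imset_card _ _.
  have h5 : #|Bx| <= #|P|.
    have inj : {in Bx &, injective (pblock P)}.
      move=> b b'; rewrite !inE => /andP [bB xb] /andP [b'B xb'] E.
      have cb : b \in cover P by rewrite (cover_partition partP).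
      have cb' : b' \in cover P by rewrite (cover_partition partP).
      apply: (trivC (pblock P b) b b' x0) => //.
      - exact: pblock_mem.
      - by rewrite mem_pblock.
      - by rewrite E mem_pblock.
    rewrite -(card_in_imset inj); apply subset_leq_card; apply/subsetP => C.
    case/imsetP => b; rewrite inE => /andP [bB _] ->; apply: pblock_mem.
    by rewrite (cover_partition partP).
  have : t * (k - 2) <= #|P| * (k - 2).
    have e1 : t * (k - 2) <= n.-1 by rewrite -ltnS prednK // -addn1.
    apply: (leq_trans e1); apply: (leq_trans h1); apply: (leq_trans h2).
    rewrite h3 leq_mul2r; apply/orP; right; exact: leq_trans h4 h5.
  by rewrite leq_pmul2r // subn_gt0.
pose c (i : 'I_t) := nth set0 (enum P) i.
have cP i : c i \in P.
  rewrite -mem_enum; apply: mem_nth; rewrite -cardE; exact: leq_trans (ltn_ord i) tP.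
have cinj i j : c i = c j -> i = j.
  move=> E; apply: val_inj; apply/eqP; rewrite -(nth_uniq set0 _ _ (enum_uniq (mem P))).
  - by apply/eqP.
  - rewrite -cardE; exact: leq_trans (ltn_ord i) tP.
  - rewrite -cardE; exact: leq_trans (ltn_ord j) tP.
pose phi (i : 'I_t) (b : {set 'I_n}) (x : 'I_n) : 'I_(sg_order (Hs i)) :=
  Ordinal (ltn_pmod (index x (enum b)) (hpos i)).
pose adj : rel 'I_n := fun x y => [exists i : 'I_t, [exists b : {set 'I_n},
   [&& b \in c i, x \in b, y \in b, x != y & sg_adj (Hs i) (phi i b x) (phi i b y)]]].
have asym x y : adj x y -> adj y x.
  case/existsP=> i /existsP [b /and5P [bc xb yb xy hadj]].
  apply/existsP; exists i; apply/existsP; exists b.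
  by rewrite bc xb yb eq_sym xy (sg_sym (Hs i)).
have adj_sym : symmetric adj by move=> x y; apply/idP/idP; exact: asym.
have adj_irr : irreflexive adj.
  move=> x; apply/existsP => -[i /existsP [b]]; by rewrite eqxx /= !andbF.
pose G := @SGraph n adj adj_sym adj_irr.
have adjb i b x y : b \in c i -> x \in b -> y \in b -> x != y ->
    adj x y = sg_adj (Hs i) (phi i b x) (phi i b y).
  move=> bc xb yb xy; apply/idP/idP.
  - case/existsP=> j /existsP [b' /and5P [b'c xb' yb' _ hadj]].
    have bb' : b' = b by apply: (uniqB x y) => //; [exact: PB b'c | exact: PB bc].
    subst b'.
    have ij : j = i by apply: cinj; apply: (trivP _ _ b).
    by subst j.
  - move=> hadj; apply/existsP; exists i; apply/existsP; exists b.
    by rewrite bc xb yb xy hadj.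
have fullG : full G t Hs.
  move=> v i.
  have [b bc vb] := blk (c i) v (cP i).
  have bB : b \in B := PB _ _ (cP i) bc.
  have sz : size (enum b) = k - 1 by rewrite -cardE Bcard.
  have hk : sg_order (Hs i) <= k - 1 by case/andP: (Hord i) => _; lia.
  pose p := index v (enum b).
  pose f (a : 'I_(sg_order (Hs i))) : 'I_n :=
    if val a == p %% sg_order (Hs i) then v else nth v (enum b) a.
  have fb a : f a \in b.
    rewrite /f; case: eqP => // _; rewrite -mem_enum; apply: mem_nth; rewrite sz.
    exact: leq_trans (ltn_ord a) hk.
  have phif a : phi i b (f a) = a.
    apply: val_inj => /=; rewrite /f; case: eqP => [-> //|ne].
    rewrite index_uniq ?enum_uniq ?modn_small //; rewrite sz.
    exact: leq_trans (ltn_ord a) hk.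
  have finj : injective f by move=> a a' E; rewrite -(phif a) -(phif a') E.
  exists f; split; [split=> // a a' | ].
  - rewrite /=; case: (eqVneq a a') => [<-|ne]; first by rewrite adj_irr (sg_irr (Hs i)).
    have fne : f a != f a' by apply/eqP => /finj /eqP; rewrite (negPf ne).
    by rewrite (adjb i b) // !phif.
  - exists (Ordinal (ltn_pmod p (hpos i))); by rewrite /f /= eqxx.
have [m [Qm [mmin mN]]] := min_ex
  (fun m => exists G, full G t Hs /\ 0 < sg_order G /\ sg_order G = m) n
  (ex_intro _ G (conj fullG (conj n0 erefl))).
exists m; split=> //; split=> // G' fG G0; apply: mmin; by exists G'.
Qed.
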